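(* Let $n\ge 1$ and let $\mathbf{P}_A,\mathbf{P}_B,\mathbf{Q}_A,\mathbf{Q}_B\in\mathbb{R}^{n\times n}$ be symmetric positive definite matrices; put $\mathbf{C}_A=\mathbf{P}_A+\mathbf{Q}_A$, $\mathbf{C}_B=\mathbf{P}_B+\mathbf{Q}_B$. Let $J$ be an increasing cost function (see context). Let $(\mathbf{K},\mathbf{B}_F)$, with $\mathbf{K}=(\mathbf{K}_A,\mathbf{K}_B)$, define a conservative fusion. Then $(\mathbf{K},\mathbf{B}_F)$ is a solution of the Optimal Fusion with Split Covariances problem (minimize $J(\mathbf{B}_F)$ over all conservative fusions $(\mathbf{K},\mathbf{B}_F)$) if and only if there exists $\omega^*\in\arg\min_{\omega\in[0,1]} J(\mathbf{B}_{\mathrm{SCI}}(\omega))$ such that $\mathbf{B}_F=\mathbf{B}_{\mathrm{SCI}}(\omega^* )$.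
   Context: $\mathcal{A}_{\mathrm{Split}}=\{\mathbf{M}\in\mathbb{R}^{n\times n} : \begin{bmatrix}\mathbf{P}_A & \mathbf{M}\\ \mathbf{M}^\intercal & \mathbf{P}_B\end{bmatrix}\succeq 0\}$ (set of admissible cross-covariances). For gains $\mathbf{K}=(\mathbf{K}_A,\mathbf{K}_B)$ of $n\times n$ matrices and $\mathbf{P}_{AB}\in\mathcal{A}_{\mathrm{Split}}$, define $\mathbf{C}_F(\mathbf{K},\mathbf{P}_{AB})=\mathbf{K}_A\mathbf{C}_A\mathbf{K}_A^\intercal+\mathbf{K}_A\mathbf{P}_{AB}\mathbf{K}_B^\intercal+\mathbf{K}_B\mathbf{P}_{AB}^\intercal\mathbf{K}_A^\intercal+\mathbf{K}_B\mathbf{C}_B\mathbf{K}_B^\intercal$. A pair $(\mathbf{K},\mathbf{B}_F)$ with $\mathbf{B}_F$ a symmetric matrix defines a conservative fusion if $\mathbf{K}_A+\mathbf{K}_B=\mathbf{I}$ and $\mathbf{B}_F\succeq\mathbf{C}_F(\mathbf{K},\mathbf{P}_{AB})$ for all $\mathbf{P}_{AB}\in\mathcal{A}_{\mathrm{Split}}$. For $\omega\in[0,1]$ and $\bar\omega=1-\omega$, the SCI bound is defined by $\mathbf{B}_{\mathrm{SCI}}(\omega)^{-1}=\omega(\mathbf{P}_A+\omega\mathbf{Q}_A)^{-1}+\bar\omega(\mathbf{P}_B+\bar\omega\mathbf{Q}_B)^{-1}$. A cost function $J$ on symmetric positive semidefinite matrices is increasing if $\mathbf{P}\preceq\mathbf{Q}$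 implies $J(\mathbf{P})\le J(\mathbf{Q})$, and $\mathbf{P}\preceq\mathbf{Q}$ with $\mathbf{P}\neq\mathbf{Q}$ implies $J(\mathbf{P})<J(\mathbf{Q})$. Here $\preceq$ is the Loewner order. *)

(* Defs.v *)
From mathcomp Require Import all_boot all_order all_algebra.
From mathcomp Require Import reals.
Set Implicit Arguments. Unset Strict Implicit. Unset Printing Implicit Defensive.
Import Order.TTheory GRing.Theory Num.Theory.
Local Open Scope ring_scope.

Section Defs.
Variables (R : realType) (n : nat).

Definition symmx (M : 'M[R]_n) : Prop := M^T = M.

Definition psdmx (M : 'M[R]_n) : Prop :=
  symmx M /\ forall x : 'cV[R]_n, 0 <= (x^T *m M *m x) 0 0.

Definition pdmx (M : 'M[R]_n) : Prop :=
  symmx M /\ forall x : 'cV[R]_n, x != 0 -> 0 < (x^T *m M *m x) 0 0.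

Definition loewner_le (P Q : 'M[R]_n) : Prop := psdmx (Q - P).

Definition A_split (PA PB M : 'M[R]_n) : Prop :=
  forall x : 'cV[R]_(n + n),
    0 <= (x^T *m block_mx PA M M^T PB *m x) 0 0.

Definition C_F (KA KB CA CB PAB : 'M[R]_n) : 'M[R]_n :=
  KA *m CA *m KA^T + KA *m PAB *m KB^T + KB *m PAB^T *m KA^T
  + KB *m CB *m KB^T.

Definition conservative_fusion (PA PB QA QB KA KB BF : 'M[R]_n) : Prop :=
  [/\ KA + KB = 1%:M, symmx BF &
      forall PAB, A_split PA PB PAB ->
        loewner_le (C_F KA KB (PA + QA) (PB + QB) PAB) BF].

Definition B_SCI (PA PB QA QB : 'M[R]_n) (w : R) : 'M[R]_n :=
  invmx (w *: invmx (PA + w *: QA) + (1 - w) *: invmx (PB + (1 - w) *: QB)).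

Definition increasing_cost (J : 'M[R]_n -> R) : Prop :=
  forall P Q, psdmx P -> psdmx Q -> loewner_le P Q ->
    J P <= J Q /\ (P != Q -> J P < J Q).

Definition optimal_fusion (PA PB QA QB : 'M[R]_n) (J : 'M[R]_n -> R)
  (KA KB BF : 'M[R]_n) : Prop :=
  conservative_fusion PA PB QA QB KA KB BF /\
  forall KA' KB' BF', conservative_fusion PA PB QA QB KA' KB' BF' ->
    J BF <= J BF'.

End Defs.

(* Main.v *)
Require Import Defs.
From mathcomp Require Import all_boot all_order all_algebra.
From mathcomp Require Import reals.
From mathcomp Require Import polyrcf boolp classical_sets.
From mathcomp Require Import ring lra.
Import Order.TTheory GRing.Theory Num.Theory.
Local Open Scope ring_scope.
Set Implicit Arguments. Unset Strict Implicit. Unset Printing Implicit Defensive.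
Section S.
Variables (R : realType) (n : nat).
Implicit Types (x y z w u : 'cV[R]_n) (M N A D Q PA PB QA QB K KA KB BF : 'M[R]_n).
Definition dot x y : R := (x^T *m y) 0 0.
Definition qf M x : R := dot x (M *m x).
Lemma dotC x y : dot x y = dot y x.
Proof. by rewrite /dot -[x^T *m y]trmxK trmx_mul trmxK mxE. Qed.
Lemma dotDl x y z : dot (x + y) z = dot x z + dot y z.
Proof. by rewrite /dot linearD /= mulmxDl mxE. Qed.
Lemma dotZl c x z : dot (c *: x) z = c * dot x z.
Proof. by rewrite /dot linearZ /= -scalemxAl mxE. Qed.
Lemma dotNl x z : dot (- x) z = - dot x z.
Proof. by rewrite -scaleN1r dotZl mulN1r. Qed.
Lemma dotBl x y z : dot (x - y) z = dot x z - dot y z.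
Proof. by rewrite dotDl dotNl. Qed.
Lemma dotDr x y z : dot z (x + y) = dot z x + dot z y.
Proof. by rewrite dotC dotDl !(dotC z). Qed.
Lemma dotZr c x z : dot z (c *: x) = c * dot z x.
Proof. by rewrite dotC dotZl dotC. Qed.
Lemma dotNr x z : dot z (- x) = - dot z x.
Proof. by rewrite dotC dotNl dotC. Qed.
Lemma dotBr x y z : dot z (x - y) = dot z x - dot z y.
Proof. by rewrite dotDr dotNr. Qed.
Lemma dot0l x : dot 0 x = 0.
Proof. by rewrite -(scale0r 0) dotZl mul0r. Qed.
Lemma dot0r x : dot x 0 = 0.
Proof. by rewrite dotC dot0l. Qed.
Lemma dot_mul A x y : dot x (A *m y) = dot (A^T *m x) y.
Proof. by rewrite /dot trmx_mul trmxK mulmxA. Qed.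
Lemma dot_sym A x y : A^T = A -> dot x (A *m y) = dot y (A *m x).
Proof. by move=> hA; rewrite dot_mul hA dotC. Qed.
Lemma quadE M x : (x^T *m M *m x) 0 0 = qf M x.
Proof. by rewrite /qf /dot mulmxA. Qed.
Lemma qfD M N x : qf (M + N) x = qf M x + qf N x.
Proof. by rewrite /qf mulmxDl dotDr. Qed.
Lemma qfZ c M x : qf (c *: M) x = c * qf M x.
Proof. by rewrite /qf -scalemxAl dotZr. Qed.
Lemma qfN M x : qf (- M) x = - qf M x.
Proof. by rewrite -scaleN1r qfZ mulN1r. Qed.
Lemma qfB M N x : qf (M - N) x = qf M x - qf N x.
Proof. by rewrite qfD qfN. Qed.
Lemma qf0 M : qf M 0 = 0.
Proof. by rewrite /qf dot0l. Qed.
Lemma qf_conj A M x : qf (A *m M *m A^T) x = qf M (A^T *m x).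
Proof. by rewrite /qf -!mulmxA dot_mul. Qed.
Lemma qf_expand M x y : M^T = M ->
  qf M (x + y) = qf M x + 2 * dot x (M *m y) + qf M y.
Proof.
move=> hM; rewrite /qf mulmxDr !dotDl !dotDr (dot_sym y x hM); ring.
Qed.
Lemma qfZv M c x : qf M (c *: x) = c ^+ 2 * qf M x.
Proof. by rewrite /qf -scalemxAr dotZl dotZr mulrA expr2. Qed.
Lemma qfNv M x : qf M (- x) = qf M x.
Proof. by rewrite -scaleN1r qfZv sqrrN expr1n mul1r. Qed.
Lemma dotZlr M c d x y : dot (c *: x) (M *m (d *: y)) = c * d * dot x (M *m y).
Proof. by rewrite -scalemxAr dotZl dotZr mulrA. Qed.
Lemma pd_psd M : pdmx M -> forall x, 0 <= qf M x.
Proof.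
case=> _ hM x; have [->|hx] := eqVneq x 0; first by rewrite qf0.
by apply: ltW; rewrite -quadE; apply: hM.
Qed.
Lemma pd_sym M : pdmx M -> M^T = M.
Proof. by case. Qed.
Lemma pd_pos M x : pdmx M -> x != 0 -> 0 < qf M x.
Proof. by case=> _ hM hx; rewrite -quadE; apply: hM. Qed.
Lemma pd_eq0 M x : pdmx M -> qf M x = 0 -> x = 0.
Proof.
move=> hM hq; apply/eqP; apply: contraT => hx.
by have := pd_pos hM hx; rewrite hq ltxx.
Qed.
Lemma pd_unit M : pdmx M -> M \in unitmx.
Proof.
move=> hM; rewrite unitmxE unitfE; apply/negP => /det0P [v hv0 hv].
have hx : v^T != 0 by rewrite -(inj_eq (@trmx_inj _ _ _)) trmxK trmx0.
have := pd_pos hM hx; rewrite /qf /dot trmxK mulmxA hv mul0mx mxE ltxx.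
done.
Qed.
Lemma mx_eq0 (B : 'M[R]_n) : (forall v : 'cV[R]_n, B *m v = 0) -> B = 0.
Proof.
move=> h; apply/matrixP => i j.
have := congr1 (fun C : 'cV[R]_n => C i 0) (h (delta_mx j 0)).
by rewrite -colE !mxE.
Qed.
Lemma loewnerP P Q : P^T = P -> Q^T = Q ->
  (forall u, qf P u <= qf Q u) -> loewner_le P Q.
Proof.
move=> hP hQ h; split; first by rewrite /symmx linearB /= hP hQ.
by move=> x; rewrite quadE qfB subr_ge0.
Qed.
Lemma loewnerE P Q : loewner_le P Q -> forall u, qf P u <= qf Q u.
Proof. by case=> _ h u; have := h u; rewrite quadE qfB subr_ge0. Qed.
Lemma A_splitE PA PB M : A_split PA PB M <->
  forall p q, 0 <= qf PA p + 2 * dot p (M *m q) + qf PB q.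
Proof.
have key : forall p q : 'cV[R]_n,
  ((col_mx p q)^T *m block_mx PA M M^T PB *m col_mx p q) 0 0
   = qf PA p + 2 * dot p (M *m q) + qf PB q.
  move=> p q; rewrite tr_col_mx mul_row_block mul_row_col !mulmxDl mxE.
  rewrite [X in X + _]mxE [X in _ + X]mxE.
  rewrite !quadE -!mulmxA -/(dot _ _) -/(dot _ _) -/(dot _ _).
  rewrite dot_mul trmxK dotC; ring.
split.
  by move=> h p q; rewrite -key; apply: h.
by move=> h x; rewrite -[x]vsubmxK key.
Qed.
Lemma qf_gen A M B u : qf (A *m M *m B^T) u = dot (A^T *m u) (M *m (B^T *m u)).
Proof. by rewrite /qf -!mulmxA dot_mul. Qed.
Lemma qf_CF KA KB CA CB M u :
  qf (C_F KA KB CA CB M) u = qf CA (KA^T *m u)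
    + 2 * dot (KA^T *m u) (M *m (KB^T *m u)) + qf CB (KB^T *m u).
Proof.
rewrite /C_F !qfD !qf_conj.
have -> : qf (KA *m M *m KB^T) u = dot (KA^T *m u) (M *m (KB^T *m u)).
  by rewrite qf_gen.
have -> : qf (KB *m M^T *m KA^T) u = dot (KA^T *m u) (M *m (KB^T *m u)).
  by rewrite qf_gen dot_mul trmxK dotC.
ring.
Qed.
End S.
Lemma disc_le (R : realType) (P a X : R) : 0 <= X ->
  (forall t, 0 <= P + 2 * t * a + t ^+ 2 * X) -> a ^+ 2 <= P * X.
Proof.
move=> hX h; have [X0|Xpos] := eqVneq X 0.
  subst X; rewrite mulr0; have [->|a0] := eqVneq a 0; first by rewrite expr0n.
  have := h (- (P + 1) / (2 * a)).
  have -> : P + 2 * (- (P + 1) / (2 * a)) * a + (- (P + 1) / (2 * a)) ^+ 2 * 0 = -1.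
    by field; rewrite a0.
  by rewrite ler0N1.
have hX' : 0 < X by rewrite lt_def Xpos hX.
have := h (- a / X).
have -> : P + 2 * (- a / X) * a + (- a / X) ^+ 2 * X = (P * X - a ^+ 2) / X.
  by field; rewrite Xpos.
by rewrite pmulr_lge0 ?invr_gt0 // subr_ge0.
Qed.
Lemma quad_root (R : realType) (c0 c1 c2 : R) : 0 < c0 -> c0 + c1 + c2 < 0 ->
  exists s, [/\ 0 <= s, s <= 1 & c0 + c1 * s + c2 * s ^+ 2 = 0].
Proof.
move=> h0 h1.
pose p : {poly R} := c0%:P + c1 *: 'X + c2 *: 'X^2.
have hp : forall s, p.[s] = c0 + c1 * s + c2 * s ^+ 2.
  by move=> s; rewrite /p !hornerE.
have hsg : p.[0] * p.[1] <= 0.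
  rewrite !hp expr0n /= expr1n !mulr0 !mulr1 !addr0.
  by rewrite pmulr_rle0 // ltW.
have [s hs hr] := polyrcf.poly_ivt ler01 hsg.
exists s; move: hs; rewrite in_itv /= => /andP[hs0 hs1]; split => //.
by rewrite -hp; apply/eqP.
Qed.
Lemma quad_cont (R : realType) (c0 c1 c2 x0 : R) :
  0 < c0 + c1 * x0 + c2 * x0 ^+ 2 ->
  exists2 d, 0 < d & forall x, `|x - x0| < d -> 0 < c0 + c1 * x + c2 * x ^+ 2.
Proof.
move=> he; set e := c0 + c1 * x0 + c2 * x0 ^+ 2 in he.
set M := `|c1| + `|c2| * (2 * `|x0| + 1).
have hM : 0 <= M by rewrite /M addr_ge0 // mulr_ge0 // addr_ge0 // mulr_ge0.
exists (Num.min 1 (e / (M + 1))).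
  by rewrite lt_min ltr01 divr_gt0 // ltr_wpDl.
move=> x; rewrite lt_min => /andP[hx1 hxe].
set h := x - x0.
have -> : c0 + c1 * x + c2 * x ^+ 2 = e + h * (c1 + c2 * (2 * x0 + h)).
  by rewrite /e /h; ring.
have hb : `|h * (c1 + c2 * (2 * x0 + h))| <= `|h| * M.
  rewrite normrM ler_wpM2l //.
  rewrite (le_trans (ler_normD _ _)) // lerD2l normrM ler_wpM2l //.
  rewrite (le_trans (ler_normD _ _)) // normrM ger0_norm // lerD2l.
  exact: ltW.
have hb2 : `|h| * M < e.
  have : `|h| * (M + 1) < e by rewrite -ltr_pdivlMr // ltr_wpDl.
  apply: le_lt_trans; rewrite ler_wpM2l // lerDl //.
move: hb hb2; set t := h * _ => hb hb2.
have := ler_norm (- t); rewrite normrN.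
lra.
Qed.

Lemma adm_scalar (R : realType) (P Q al be l a b : R) : 0 <= P -> 0 <= Q -> 0 <= a -> 0 <= b ->
  al ^+ 2 <= P * a -> be ^+ 2 <= Q * b -> l ^+ 2 * a * b <= 1 ->
  0 <= P + 2 * (l * al * be) + Q.
Proof.
move=> hP hQ ha hb h1 h2 h3.
have h4 : al ^+ 2 * be ^+ 2 <= (P * a) * (Q * b) by apply: ler_pM; rewrite ?sqr_ge0.
have h5 : (l * al * be) ^+ 2 <= P * Q.
  rewrite !exprMn -mulrA (le_trans (ler_wpM2l (sqr_ge0 l) h4)) //.
  have -> : l ^+ 2 * (P * a * (Q * b)) = (l ^+ 2 * a * b) * (P * Q) by ring.
  by rewrite ler_piMl // mulr_ge0.
move: h5; set t := l * al * be => h5.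
rewrite leNgt; apply/negP => hneg.
have h6 : 0 < P + Q - 2 * t by lra.
have h7 : (P + 2 * t + Q) * (P + Q - 2 * t) < 0 by rewrite pmulr_llt0.
have h8 : 0 <= (P - Q) ^+ 2 by apply: sqr_ge0.
have : (P + 2 * t + Q) * (P + Q - 2 * t) = (P - Q) ^+ 2 + 4 * (P * Q - t ^+ 2) by ring.
lra.
Qed.

Section S2.
Variables (R : realType) (n : nat).
Implicit Types (x y z w u : 'cV[R]_n) (M N A D Q PA PB QA QB K KA KB BF : 'M[R]_n).
Lemma CS M p x : M^T = M -> (forall z, 0 <= qf M z) ->
  dot p (M *m x) ^+ 2 <= qf M p * qf M x.
Proof.
move=> hM hpsd; apply: disc_le => // t.
have := hpsd (p + t *: x); rewrite qf_expand // qfZv -scalemxAr dotZr.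
by rewrite mulrA.
Qed.
Lemma CF_sym KA KB CA CB M : CA^T = CA -> CB^T = CB ->
  (C_F KA KB CA CB M)^T = C_F KA KB CA CB M.
Proof.
move=> hA hB; rewrite /C_F !linearD /= !trmx_mul !trmxK !mulmxA hA hB.
by rewrite -!addrA; congr (_ + _); rewrite addrCA.
Qed.
Lemma inv_sym M : M^T = M -> (invmx M)^T = invmx M.
Proof. by move=> h; rewrite trmx_inv h. Qed.
Lemma dot_inv D w z : D^T = D -> D \in unitmx ->
  dot (invmx D *m w) (D *m z) = dot w z.
Proof.
by move=> hs hu; rewrite dot_mul hs mulmxA mulmxV // mul1mx.
Qed.
Lemma inv_pd D : pdmx D -> pdmx (invmx D).
Proof.
move=> hD; have hu := pd_unit hD; have hs := pd_sym hD.
split; first by rewrite /symmx inv_sym.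
move=> u hu0; rewrite quadE /qf.
have -> : u = D *m (invmx D *m u) by rewrite mulmxA mulmxV // mul1mx.
rewrite mulmxA mulVmx // mul1mx dotC.
rewrite -/(qf D _); apply: pd_pos => //.
apply: contra hu0 => /eqP h0.
by rewrite -[u](mul1mx) -(mulmxV hu) -mulmxA h0 mulmx0.
Qed.
Lemma pdD (A B : 'M[R]_n) : pdmx A -> pdmx B -> pdmx (A + B).
Proof.
move=> hA hB; split; first by rewrite /symmx linearD /= (pd_sym hA) (pd_sym hB).
by move=> x hx; rewrite quadE qfD; apply: ltr_wpDr; [apply: pd_psd|apply: pd_pos].
Qed.
Lemma pdZ c A : 0 < c -> pdmx A -> pdmx (c *: A).
Proof.
move=> hc hA; split; first by rewrite /symmx linearZ /= (pd_sym hA).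
by move=> x hx; rewrite quadE qfZ; apply: mulr_gt0 => //; apply: pd_pos.
Qed.
Lemma sci_id DA DB B x y u : pdmx DA -> pdmx DB ->
  B = invmx (invmx DA + invmx DB) -> x + y = u ->
  qf DA x + qf DB y = qf B u + qf DA (x - invmx DA *m (B *m u))
     + qf DB (x - invmx DA *m (B *m u)).
Proof.
move=> hA hB hBdef hxy.
have uA := pd_unit hA; have uB := pd_unit hB.
have sA := pd_sym hA; have sB := pd_sym hB.
have hG : pdmx (invmx DA + invmx DB) by apply: pdD; apply: inv_pd.
have uG := pd_unit hG.
have sBB : B^T = B by rewrite hBdef inv_sym // (pd_sym hG).
set e := x - invmx DA *m (B *m u).
set xs := invmx DA *m (B *m u).
set ys := invmx DB *m (B *m u).
have hsum : xs + ys = u.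
  by rewrite /xs /ys -mulmxDl mulmxA hBdef mulmxV // mul1mx.
have hx : x = xs + e by rewrite /e addrC subrK.
have hy : y = ys + - e.
  have -> : y = u - x by rewrite -hxy addrC addKr.
  by rewrite -hsum hx opprD addrACA subrr add0r.
have h1 : dot xs (DA *m e) = dot (B *m u) e by rewrite dot_inv.
have h2 : dot ys (DB *m - e) = - dot (B *m u) e.
  by rewrite mulmxN dotNr dot_inv.
have h3 : qf DA xs = dot (B *m u) xs by rewrite /qf /xs dot_inv.
have h4 : qf DB ys = dot (B *m u) ys by rewrite /qf /ys dot_inv.
have h5 : dot (B *m u) xs + dot (B *m u) ys = qf B u.
  by rewrite -dotDr hsum /qf dotC.
rewrite -/xs -/e.
clearbody e xs ys.
rewrite hx hy !qf_expand // qfNv h1 h2 h3 h4 -h5; ring.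
Qed.
Lemma invZ_pd (w : R) A Q : 0 < w -> pdmx A -> pdmx Q ->
  invmx (w^-1 *: A + Q) = w *: invmx (A + w *: Q).
Proof.
move=> hw hA hQ.
have hw0 : w != 0 by rewrite gt_eqF.
have -> : w^-1 *: A + Q = w^-1 *: (A + w *: Q).
  by rewrite scalerDr scalerA mulVf // scale1r.
rewrite invmxZ ?invrK //.
by apply: pd_unit; apply: pdZ; rewrite ?invr_gt0 //; apply: pdD => //; apply: pdZ.
Qed.
Lemma BSCI_eq (w : R) PA PB QA QB : 0 < w < 1 -> pdmx PA -> pdmx PB -> pdmx QA -> pdmx QB ->
  B_SCI PA PB QA QB w = invmx (invmx (w^-1 *: PA + QA) + invmx ((1 - w)^-1 *: PB + QB)).
Proof.
move=> /andP[h0 h1] hPA hPB hQA hQB.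
by rewrite /B_SCI !invZ_pd // subr_gt0.
Qed.
Lemma psd0 : psdmx (0 : 'M[R]_n).
Proof.
split; first by rewrite /symmx trmx0.
by move=> x; rewrite mulmx0 mul0mx mxE.
Qed.
Lemma cons_CB PA PB QA QB : (PB + QB)^T = PB + QB ->
  conservative_fusion PA PB QA QB 0 1%:M (PB + QB).
Proof.
move=> hs; split; [by rewrite add0r | by [] |] => PAB _.
rewrite /loewner_le /C_F.
rewrite trmx0 trmx1 !mul0mx !mulmx0 mul1mx mulmx1 !add0r subrr.
exact: psd0.
Qed.
Lemma cons_CA PA PB QA QB : (PA + QA)^T = PA + QA ->
  conservative_fusion PA PB QA QB 1%:M 0 (PA + QA).
Proof.
move=> hs; split; [by rewrite addr0 | by [] |] => PAB _.
rewrite /loewner_le /C_F trmx0 trmx1 ?mul0mx ?mulmx0 ?mul1mx ?mulmx1 ?mul0mx ?mulmx0 ?addr0 ?add0r subrr.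
exact: psd0.
Qed.
Lemma cons_interior (w : R) PA PB QA QB : 0 < w < 1 ->
  pdmx PA -> pdmx PB -> pdmx QA -> pdmx QB ->
  let DA := w^-1 *: PA + QA in let DB := (1 - w)^-1 *: PB + QB in
  let B := invmx (invmx DA + invmx DB) in
  conservative_fusion PA PB QA QB (B *m invmx DA) (B *m invmx DB) (B_SCI PA PB QA QB w).
Proof.
move=> hw hPA hPB hQA hQB DA DB B.
have /andP[w0 w1] := hw.
have w1' : 0 < 1 - w by rewrite subr_gt0.
have hDA : pdmx DA by apply: pdD => //; apply: pdZ; rewrite ?invr_gt0.
have hDB : pdmx DB by apply: pdD => //; apply: pdZ; rewrite ?invr_gt0.
have hG : pdmx (invmx DA + invmx DB) by apply: pdD; apply: inv_pd.
have uG := pd_unit hG.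
have sB : B^T = B by rewrite inv_sym // (pd_sym hG).
rewrite (BSCI_eq hw) // -/DA -/DB -/B.
split.
- by rewrite -mulmxDr mulVmx.
- exact: sB.
move=> PAB hadm.
apply: loewnerP => //.
  by apply: CF_sym; apply: pd_sym; apply: pdD.
move=> u; rewrite qf_CF.
have hx : (B *m invmx DA)^T *m u = invmx DA *m (B *m u).
  by rewrite trmx_mul sB inv_sym ?(pd_sym hDA) // mulmxA.
have hy : (B *m invmx DB)^T *m u = invmx DB *m (B *m u).
  by rewrite trmx_mul sB inv_sym ?(pd_sym hDB) // mulmxA.
rewrite hx hy.
set x := invmx DA *m (B *m u); set y := invmx DB *m (B *m u).
have hsum : x + y = u by rewrite /x /y -mulmxDl mulmxA mulmxV // mul1mx.
have := sci_id hDA hDB (erefl B) hsum.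
rewrite -/x subrr !qf0 !addr0 => <-.
rewrite /DA /DB !qfD !qfZ.
have := (A_splitE PA PB PAB).1 hadm ((1 - w) *: x) (- w *: y).
rewrite !qfZv dotZlr.
set a := qf PA x; set b := qf PB y; set m := dot x (PAB *m y).
move=> hm.
rewrite -subr_ge0.
have -> : w^-1 * a + qf QA x + ((1 - w)^-1 * b + qf QB y) -
   (a + qf QA x + 2 * m + (b + qf QB y)) =
   ((1 - w) ^+ 2 * a + 2 * ((1 - w) * - w * m) + (- w) ^+ 2 * b) / (w * (1 - w)).
  by field; rewrite gt_eqF // gt_eqF.
by apply: divr_ge0 => //; apply: mulr_ge0; apply: ltW.
Qed.
Lemma qf_comb M (s t : R) v w : M^T = M ->
  qf M (s *: v + t *: w) = s ^+ 2 * qf M v + 2 * (s * t * dot v (M *m w)) + t ^+ 2 * qf M w.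
Proof. by move=> hM; rewrite qf_expand // !qfZv dotZlr. Qed.
Lemma pairwise P D v w : P^T = P -> D^T = D ->
  (forall u, qf D u = 0 -> 0 <= qf P u) ->
  qf P v < 0 -> qf D v < 0 -> qf P w < 0 -> 0 < qf D w -> False.
Proof.
move=> sP sD LL hPv hDv hPw hDw.
have [w' [h1 h2 h3]] : exists w', [/\ dot v (P *m w') <= 0, qf P w' < 0 & 0 < qf D w'].
  case: (leP (dot v (P *m w)) 0) => hm; first by exists w.
  by exists (- w); rewrite !qfNv mulmxN dotNr oppr_le0 ltW.
set m := dot v (D *m w').
have [s [hs0 hs1 hs]] := @quad_root R (qf D w') (2 * m - 2 * qf D w')
   (qf D v - 2 * m + qf D w') h3 ltac:(lra).
have := LL (s *: v + (1 - s) *: w').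
rewrite !qf_comb // -/m.
have -> : s ^+ 2 * qf D v + 2 * (s * (1 - s) * m) + (1 - s) ^+ 2 * qf D w' = 0.
  by rewrite -hs; ring.
move=> /(_ erefl).
set p := dot v (P *m w').
set c := Num.max (qf P v) (qf P w').
have hc : c < 0 by rewrite /c gt_max hPv h2.
have hc1 : qf P v <= c by rewrite /c le_max lexx.
have hc2 : qf P w' <= c by rewrite /c le_max lexx orbT.
have e1 : s ^+ 2 * qf P v <= s ^+ 2 * c by rewrite ler_wpM2l // sqr_ge0.
have e2 : (1 - s) ^+ 2 * qf P w' <= (1 - s) ^+ 2 * c by rewrite ler_wpM2l // sqr_ge0.
have e3 : s * (1 - s) * p <= 0.
  by rewrite mulr_ge0_le0 // mulr_ge0 // subr_ge0.
have e4 : 1 <= 2 * (s ^+ 2 + (1 - s) ^+ 2).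
  have : 0 <= (2 * s - 1) ^+ 2 by apply: sqr_ge0.
  rewrite !expr2; lra.
have e5 : (s ^+ 2 + (1 - s) ^+ 2) * c <= c / 2.
  rewrite -subr_ge0.
  have -> : c / 2 - (s ^+ 2 + (1 - s) ^+ 2) * c = (- c) * ((2 * (s ^+ 2 + (1 - s) ^+ 2) - 1) / 2).
    by field.
  apply: mulr_ge0; first by rewrite oppr_ge0 ltW.
  by apply: divr_ge0 => //; rewrite subr_ge0.
lra.
Qed.
Lemma cons_bound PA PB QA QB KA KB BF M u :
  conservative_fusion PA PB QA QB KA KB BF -> A_split PA PB M ->
  qf PA (KA^T *m u) + qf PB (KB^T *m u) + 2 * dot (KA^T *m u) (M *m (KB^T *m u))
  <= qf BF u - qf QA (KA^T *m u) - qf QB (KB^T *m u).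
Proof.
case=> _ _ h hM; have := loewnerE (h M hM) u.
rewrite qf_CF !qfD; lra.
Qed.
Lemma adm0 PA PB : pdmx PA -> pdmx PB -> A_split PA PB 0.
Proof.
move=> hA hB; apply/A_splitE => p q.
by rewrite mul0mx dot0r mulr0 addr0 addr_ge0 //; apply: pd_psd.
Qed.
Lemma dotL (l : R) PA PB x y p q :
  dot p ((l *: (PA *m x *m (PB *m y)^T)) *m q) = l * dot p (PA *m x) * dot (PB *m y) q.
Proof.
rewrite -scalemxAl -mulmxA [(PB *m y)^T *m q]mx11_scalar mul_mx_scalar.
by rewrite dotZr dotZr -/(dot (PB *m y) q) mulrA mulrAC.
Qed.
Lemma admL (l : R) PA PB x y : pdmx PA -> pdmx PB ->
  l ^+ 2 * qf PA x * qf PB y <= 1 -> A_split PA PB (l *: (PA *m x *m (PB *m y)^T)).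
Proof.
move=> hA hB hl; apply/A_splitE => p q.
rewrite dotL.
have := @adm_scalar R (qf PA p) (qf PB q) (dot p (PA *m x)) (dot (PB *m y) q) l
  (qf PA x) (qf PB y).
rewrite mulrA; apply; rewrite ?pd_psd //.
  by apply: CS => //; [apply: pd_sym | apply: pd_psd].
rewrite dotC.
by apply: CS => //; [apply: pd_sym | apply: pd_psd].
Qed.
Lemma LL PA PB QA QB KA KB BF (w : R) u : pdmx PA -> pdmx PB ->
  conservative_fusion PA PB QA QB KA KB BF -> 0 <= w <= 1 ->
  (1 - w) ^+ 2 * qf PA (KA^T *m u) - w ^+ 2 * qf PB (KB^T *m u) = 0 ->
  0 <= w * (1 - w) * (qf BF u - qf QA (KA^T *m u) - qf QB (KB^T *m u))
       - (1 - w) * qf PA (KA^T *m u) - w * qf PB (KB^T *m u).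
Proof.
move=> hA hB hc /andP[w0 w1].
set x := KA^T *m u; set y := KB^T *m u.
set a := qf PA x; set b := qf PB y; set f := (qf BF u - _ - _).
move=> hd.
have ha : 0 <= a by apply: pd_psd.
have hb : 0 <= b by apply: pd_psd.
have hw : 0 <= w * (1 - w) by rewrite mulr_ge0 // subr_ge0.
have [a0|apos] : a = 0 \/ 0 < a by move: ha; rewrite le_eqVlt => /orP[/eqP ->|->]; [left|right].
  have := cons_bound u hc (adm0 hA hB); rewrite mul0mx dot0r mulr0 addr0 -/x -/y -/a -/b -/f.
  move=> hf.
  have e1 : 0 <= w * (1 - w) * (f - b) by rewrite mulr_ge0 // subr_ge0; lra.
  have e2 : w ^+ 2 * b = 0 by move: hd; rewrite a0 mulr0 sub0r => /eqP; rewrite oppr_eq0 => /eqP.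
  rewrite a0 mulr0 subr0.
  have -> : w * (1 - w) * f - w * b = w * (1 - w) * (f - b) - w ^+ 2 * b by ring.
  by rewrite e2 subr0.
have [w1e|w1'] := eqVneq w 1.
  move: hd; rewrite w1e subrr expr0n /= mul0r sub0r expr1n mul1r mulr0 mul0r => hd.
  lra.
have w1l : 0 < 1 - w by rewrite subr_gt0 lt_neqAle w1' w1.
set l := w / ((1 - w) * a).
have hl : l ^+ 2 * a * b = 1.
  rewrite /l; have : w ^+ 2 * b = (1 - w) ^+ 2 * a by apply/eqP; rewrite eq_sym -subr_eq0 hd.
  move=> e.
  have -> : l ^+ 2 * a * b = (w ^+ 2 * b) / ((1 - w) ^+ 2 * a).
    by rewrite /l; field; rewrite ?gt_eqF //.
  by rewrite e divff // mulf_neq0 ?gt_eqF ?exprn_gt0.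
have hadm : A_split PA PB (l *: (PA *m x *m (PB *m y)^T)).
  by apply: admL => //; rewrite -/a -/b hl.
have := cons_bound u hc hadm; rewrite dotL -/x -/y -/a -/b -/f.
rewrite -/(qf PA x) -/a dotC -/(qf PB y) -/b => hf.
have e : w * (1 - w) * (2 * (l * a * b)) = 2 * (w ^+ 2 * b).
  by rewrite /l; field; rewrite ?gt_eqF.
have e1 : 0 <= w * (1 - w) * (f - (a + b + 2 * (l * a * b))).
  by rewrite mulr_ge0 // subr_ge0.
have -> : w * (1 - w) * f - (1 - w) * a - w * b =
  w * (1 - w) * (f - (a + b + 2 * (l * a * b))) + w * (1 - w) * (2 * (l * a * b))
   - 2 * (w ^+ 2 * b) - ((1 - w) ^+ 2 * a - w ^+ 2 * b) by ring.
by rewrite e hd subr0 addrK.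
Qed.
Lemma conj_sym K M : M^T = M -> (K *m M *m K^T)^T = K *m M *m K^T.
Proof. by move=> h; rewrite !trmx_mul trmxK h mulmxA. Qed.
Lemma step1 PA PB QA QB KA KB BF : pdmx PA -> pdmx PB -> pdmx QA -> pdmx QB ->
  conservative_fusion PA PB QA QB KA KB BF ->
  exists2 w : R, 0 <= w <= 1 & forall u,
    0 <= w * (1 - w) * (qf BF u - qf QA (KA^T *m u) - qf QB (KB^T *m u))
       - (1 - w) * qf PA (KA^T *m u) - w * qf PB (KB^T *m u).
Proof.
move=> hPA hPB hQA hQB hc.
have sBF : BF^T = BF by case: hc.
set a := fun u => qf PA (KA^T *m u).
set b := fun u => qf PB (KB^T *m u).
set f := fun u => qf BF u - qf QA (KA^T *m u) - qf QB (KB^T *m u).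
rewrite -/a -/b -/f.
set psi := fun (w : R) u => w * (1 - w) * f u - (1 - w) * a u - w * b u.
set dd := fun (w : R) u => (1 - w) ^+ 2 * a u - w ^+ 2 * b u.
suff : exists2 w : R, 0 <= w <= 1 & forall u, 0 <= psi w u by [].
have ha : forall u, 0 <= a u by move=> u; apply: pd_psd.
have hb : forall u, 0 <= b u by move=> u; apply: pd_psd.
set Am := KA *m PA *m KA^T; set Bm := KB *m PB *m KB^T.
set Fm := BF - KA *m QA *m KA^T - KB *m QB *m KB^T.
have sAm : Am^T = Am by apply: conj_sym; apply: pd_sym.
have sBm : Bm^T = Bm by apply: conj_sym; apply: pd_sym.
have sFm : Fm^T = Fm.
  by rewrite /Fm !linearB /= sBF !conj_sym //; apply: pd_sym.
have qA : forall u, qf Am u = a u by move=> u; rewrite qf_conj.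
have qB : forall u, qf Bm u = b u by move=> u; rewrite qf_conj.
have qF : forall u, qf Fm u = f u by move=> u; rewrite /Fm !qfB !qf_conj.
have PW : forall (w : R) u v, 0 <= w <= 1 -> psi w u < 0 -> dd w u < 0 ->
    psi w v < 0 -> 0 < dd w v -> False.
  move=> w u v hw h1 h2 h3 h4.
  pose Pm := (w * (1 - w)) *: Fm - (1 - w) *: Am - w *: Bm.
  pose Dm := ((1 - w) ^+ 2) *: Am - (w ^+ 2) *: Bm.
  have qP : forall z, qf Pm z = psi w z by move=> z; rewrite /Pm !qfB !qfZ qA qB qF.
  have qD : forall z, qf Dm z = dd w z by move=> z; rewrite /Dm !qfB !qfZ qA qB.
  apply: (@pairwise Pm Dm u v).
  - by rewrite /Pm !linearB !linearZ /= sBF sAm sBm !conj_sym //; apply: pd_sym.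
  - by rewrite /Dm !linearB !linearZ /= sAm sBm.
  - by move=> z; rewrite qP qD; apply: LL.
  1-4: by rewrite ?qP ?qD.
have psiE : forall (w : R) u, psi w u = (- a u) + (f u + a u - b u) * w + (- f u) * w ^+ 2.
  by move=> w u; rewrite /psi; ring.
have ddE : forall (w : R) u, dd w u = a u + (- (2 * a u)) * w + (a u - b u) * w ^+ 2.
  by move=> w u; rewrite /dd; ring.
have LLw : forall (w : R) u, 0 <= w <= 1 -> dd w u = 0 -> 0 <= psi w u.
  by move=> w u hw hd; apply: LL.
have cpsi : forall (s : R) u, psi s u < 0 ->
    exists2 d, 0 < d & forall x : R, `|x - s| < d -> psi x u < 0.
  move=> s u hs.
  have [d dp hd] := @quad_cont R (a u) (- (f u + a u - b u)) (f u) s ltac:(rewrite psiE in hs; lra).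
  by exists d => // x /hd; rewrite psiE; lra.
have cdp : forall (s : R) u, 0 < dd s u ->
    exists2 d, 0 < d & forall x : R, `|x - s| < d -> 0 < dd x u.
  move=> s u hs.
  have [d dp hd] := @quad_cont R (a u) (- (2 * a u)) (a u - b u) s ltac:(rewrite ddE in hs; lra).
  by exists d => // x /hd; rewrite ddE; lra.
have cdn : forall (s : R) u, dd s u < 0 ->
    exists2 d, 0 < d & forall x : R, `|x - s| < d -> dd x u < 0.
  move=> s u hs.
  have [d dp hd] := @quad_cont R (- a u) (2 * a u) (- (a u - b u)) s ltac:(rewrite ddE in hs; lra).
  by exists d => // x /hd; rewrite ddE; lra.
pose T : set R := fun (w : R) => 0 <= w <= 1 /\ exists u, psi w u < 0 /\ 0 < dd w u.
case: (pselect (exists t : R, T t)) => [[t0 Tt0]|hT]; last first.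
  exists 0; first by rewrite lexx ler01.
  move=> u; rewrite leNgt; apply/negP => hneg; apply: hT; exists 0.
  split; first by rewrite lexx ler01.
  exists u; split => //.
  have : dd 0 u = - psi 0 u by rewrite /dd /psi; ring.
  lra.
have hub : ubound T 1 by move=> y [/andP[_ ->]].
have hub' : has_ubound T by exists 1.
have hsup : has_sup T by split => //; exists t0.
set s := sup T.
have sub : forall t : R, T t -> t <= s by move=> t Tt; apply: ub_le_sup.
have s0 : 0 <= s by have [/andP[h _] _] := Tt0; apply: le_trans h (sub _ Tt0).
have s1 : s <= 1 by apply: ge_sup => //; exists t0.
exists s; first by rewrite s0 s1.
move=> u; rewrite leNgt; apply/negP => hneg.
have [d1 d1p hd1] := cpsi s u hneg.
case: (ltgtP (dd s u) 0) => hds.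
- have [d2 d2p hd2] := cdn s u hds.
  set eps := Num.min d1 d2.
  have epsp : 0 < eps by rewrite lt_min d1p d2p.
  have [t Tt ht] := sup_adherent epsp hsup.
  have hts := sub t Tt.
  have hdist : `|t - s| < eps.
    by rewrite distrC ger0_norm ?subr_ge0 //; move: ht; rewrite -/s; lra.
  have hdist1 : `|t - s| < d1 by apply: lt_le_trans hdist _; rewrite ge_min lexx.
  have hdist2 : `|t - s| < d2 by apply: lt_le_trans hdist _; rewrite ge_min lexx orbT.
  case: Tt => ht01 [v [hv1 hv2]].
  exact: (PW t u v ht01 (hd1 _ hdist1) (hd2 _ hdist2) hv1 hv2).
- have [d2 d2p hd2] := cdp s u hds.
  have s1' : s < 1.
    rewrite lt_neqAle s1 andbT; apply/eqP => hs1.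
    by move: hds; rewrite hs1 /dd subrr expr0n /= mul0r expr1n mul1r sub0r oppr_gt0 ltNge hb.
  set eps := Num.min d1 d2.
  have epsp : 0 < eps by rewrite lt_min d1p d2p.
  set t := Num.min (s + eps / 2) 1.
  have hts : 0 < t - s.
    by rewrite subr_gt0 lt_min s1' andbT ltrDl divr_gt0.
  have hts2 : t - s <= eps / 2.
    by rewrite lerBlDl ge_min lexx.
  have hdist : `|t - s| < eps by rewrite gtr0_norm //; lra.
  have hdist1 : `|t - s| < d1 by apply: lt_le_trans hdist _; rewrite ge_min lexx.
  have hdist2 : `|t - s| < d2 by apply: lt_le_trans hdist _; rewrite ge_min lexx orbT.
  have Tt : T t.
    split; last by exists u; split; [apply: hd1 | apply: hd2].
    rewrite ge_min lexx orbT andbT; lra.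
  have := sub t Tt; lra.
- have hs01 : 0 <= s <= 1 by rewrite s0 s1.
  by have := LLw s u hs01 hds; lra.
Qed.

Lemma BSCI0 PA PB QA QB : B_SCI PA PB QA QB 0 = PB + QB.
Proof. by rewrite /B_SCI subr0 !scale1r !scale0r add0r invmxK. Qed.
Lemma BSCI1 PA PB QA QB : B_SCI PA PB QA QB 1 = PA + QA.
Proof. by rewrite /B_SCI subrr !scale1r !scale0r addr0 invmxK. Qed.
Lemma key PA PB QA QB KA KB BF : pdmx PA -> pdmx PB -> pdmx QA -> pdmx QB ->
  conservative_fusion PA PB QA QB KA KB BF ->
  exists2 w : R, 0 <= w <= 1 & loewner_le (B_SCI PA PB QA QB w) BF.
Proof.
move=> hPA hPB hQA hQB hc.
have [w hw hpsi] := step1 hPA hPB hQA hQB hc.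
have hc' := hc; case: hc' => hK sBF hcb.
case: (boolP (w == 0)) => [/eqP w0|w0'].
  exists 0; first by rewrite lexx ler01.
  have hA0 : forall u, KA^T *m u = 0.
    move=> u; apply: (pd_eq0 hPA); apply/eqP; rewrite eq_le pd_psd // andbT.
    by have := hpsi u; rewrite w0 subr0 !mul0r mul1r sub0r subr0 oppr_ge0.
  have KA0 : KA = 0 by rewrite -[KA]trmxK (mx_eq0 hA0) trmx0.
  have KB1 : KB = 1%:M by rewrite -hK KA0 add0r.
  rewrite BSCI0; have := hcb 0 (adm0 hPA hPB).
  rewrite KA0 KB1 /C_F trmx0 trmx1 ?mul0mx ?mulmx0 ?mul1mx ?mulmx1 ?mul0mx ?mulmx0 ?addr0 ?add0r.
  done.
case: (boolP (w == 1)) => [/eqP w1|w1'].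
  exists 1; first by rewrite ler01 lexx.
  have hB0 : forall u, KB^T *m u = 0.
    move=> u; apply: (pd_eq0 hPB); apply/eqP; rewrite eq_le pd_psd // andbT.
    have := hpsi u; rewrite w1 subrr.
    rewrite mulr0 !mul0r !mul1r; lra.
  have KB0 : KB = 0 by rewrite -[KB]trmxK (mx_eq0 hB0) trmx0.
  have KA1 : KA = 1%:M by rewrite -hK KB0 addr0.
  rewrite BSCI1; have := hcb 0 (adm0 hPA hPB).
  rewrite KA1 KB0 /C_F trmx0 trmx1 ?mul0mx ?mulmx0 ?mul1mx ?mulmx1 ?mul0mx ?mulmx0 ?addr0 ?add0r.
  done.
exists w => //.
have /andP[hw0 hw1] := hw.
have wp : 0 < w by rewrite lt_neqAle eq_sym w0' hw0.
have wq : 0 < 1 - w by rewrite subr_gt0 lt_neqAle w1' hw1.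
have hw01 : 0 < w < 1 by rewrite wp -subr_gt0 wq.
rewrite (BSCI_eq hw01) //.
set DA := w^-1 *: PA + QA; set DB := (1 - w)^-1 *: PB + QB.
have hDA : pdmx DA by apply: pdD => //; apply: pdZ; rewrite ?invr_gt0.
have hDB : pdmx DB by apply: pdD => //; apply: pdZ; rewrite ?invr_gt0.
have hG : pdmx (invmx DA + invmx DB) by apply: pdD; apply: inv_pd.
apply: loewnerP => //; first by rewrite inv_sym // (pd_sym hG).
move=> u.
have hsum : KA^T *m u + KB^T *m u = u by rewrite -mulmxDl -linearD /= hK trmx1 mul1mx.
have := sci_id hDA hDB (erefl _) hsum.
set e := _ - _.
have he1 : 0 <= qf DA e by apply: pd_psd.
have he2 : 0 <= qf DB e by apply: pd_psd.
move: he1 he2; set ea := qf DA e; set eb := qf DB e => he1 he2.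
move=> hid.
have := hpsi u.
move: hid; rewrite /DA /DB !qfD !qfZ.
set a := qf PA _; set b := qf PB _; set f1 := qf BF u; set qa := qf QA _; set qb := qf QB _.
move=> hid hp.
have : 0 <= f1 - (w^-1 * a + qa + ((1 - w)^-1 * b + qb)).
  have -> : f1 - (w^-1 * a + qa + ((1 - w)^-1 * b + qb)) =
    (w * (1 - w) * (f1 - qa - qb) - (1 - w) * a - w * b) / (w * (1 - w)).
    by field; rewrite ?gt_eqF.
  by apply: divr_ge0 => //; apply: mulr_ge0; apply: ltW.
lra.
Qed.
Lemma achieve (w : R) PA PB QA QB : 0 <= w <= 1 ->
  pdmx PA -> pdmx PB -> pdmx QA -> pdmx QB ->
  exists KA, exists KB, conservative_fusion PA PB QA QB KA KB (B_SCI PA PB QA QB w).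
Proof.
move=> /andP[hw0 hw1] hPA hPB hQA hQB.
case: (boolP (w == 0)) => [/eqP w0|w0'].
  rewrite w0 BSCI0; exists 0, 1%:M; apply: cons_CB.
  by apply: pd_sym; apply: pdD.
case: (boolP (w == 1)) => [/eqP w1|w1'].
  rewrite w1 BSCI1; exists 1%:M, 0; apply: cons_CA.
  by apply: pd_sym; apply: pdD.
have hw : 0 < w < 1.
  by rewrite lt_neqAle eq_sym w0' hw0 lt_neqAle w1' hw1.
by eexists; eexists; apply: cons_interior.
Qed.
Lemma cons_psd PA PB QA QB KA KB BF : pdmx PA -> pdmx PB -> pdmx QA -> pdmx QB ->
  conservative_fusion PA PB QA QB KA KB BF -> psdmx BF.
Proof.
move=> hPA hPB hQA hQB hc; split; first by case: hc.
move=> x; rewrite quadE.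
have := cons_bound x hc (adm0 hPA hPB); rewrite mul0mx dot0r mulr0 addr0.
have := pd_psd hPA (KA^T *m x); have := pd_psd hPB (KB^T *m x).
have := pd_psd hQA (KA^T *m x); have := pd_psd hQB (KB^T *m x).
lra.
Qed.
End S2.

Unset Implicit Arguments.
Set Strict Implicit.

Theorem theorem1 (R : realType) (n : nat) (hn : (0 < n)%N)
  (PA PB QA QB : 'M[R]_n)
  (hPA : pdmx PA) (hPB : pdmx PB) (hQA : pdmx QA) (hQB : pdmx QB)
  (J : 'M[R]_n -> R) (hJ : increasing_cost J)
  (KA KB BF : 'M[R]_n)
  (hcons : conservative_fusion PA PB QA QB KA KB BF) :
  optimal_fusion PA PB QA QB J KA KB BF <->
  exists w : R,
    [/\ 0 <= w <= 1,
        (forall w' : R, 0 <= w' <= 1 ->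
           J (B_SCI PA PB QA QB w) <= J (B_SCI PA PB QA QB w')) &
        BF = B_SCI PA PB QA QB w].
Proof.
have psdS : forall w : R, 0 <= w <= 1 -> psdmx (B_SCI PA PB QA QB w).
  move=> w hw; have [KA' [KB' hc']] := achieve hw hPA hPB hQA hQB.
  exact: cons_psd hc'.
have psdBF := cons_psd hPA hPB hQA hQB hcons.
split.
- case=> _ hopt.
  have [w hw hle] := key hPA hPB hQA hQB hcons.
  have [KA' [KB' hc']] := achieve hw hPA hPB hQA hQB.
  have h1 := hopt _ _ _ hc'.
  have [h2 h3] := hJ _ _ (psdS w hw) psdBF hle.
  have hEq : B_SCI PA PB QA QB w = BF.
    apply/eqP; apply: contraT => hne.
    by have := h3 hne; rewrite ltNge h1.
  exists w; split => //.
  move=> w' hw'; rewrite hEq.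
  have [KA'' [KB'' hc'']] := achieve hw' hPA hPB hQA hQB.
  exact: hopt _ _ _ hc''.
- case=> w [hw hmin hBF]; split => // KA' KB' BF' hc'.
  have [w' hw' hle] := key hPA hPB hQA hQB hc'.
  have psdBF' := cons_psd hPA hPB hQA hQB hc'.
  have [h2 _] := hJ _ _ (psdS w' hw') psdBF' hle.
  by rewrite hBF; apply: le_trans (hmin _ hw') h2.
Qed.
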